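(* Assume the standing hypotheses and definitions in the context. For any $(t_0,x_0)\in\mathbb{R}\times\mathbb{R}^n$, the function $t\mapsto H(t,X(t,t_0,x_0))$ is a solution of the linear system $x'=A(t)x$.
   Context: Standing hypotheses: $A:\mathbb{R}\to\mathbb{R}^{n\times n}$ is continuous and bounded, $T(t,s)$ is the evolution operator of $x'=A(t)x$. $\mu:\mathbb{R}\to(0,\infty)$ is an increasing differentiable growth rate: $\mu(0)=1$, $\lim_{t\to-\infty}\mu(t)=0$, $\lim_{t\to+\infty}\mu(t)=+\infty$. The system $x'=A(t)x$ admits an algebraic dichotomy: projections $P(s)$, $Q(s)=I-P(s)$, constants $K,\alpha>0$ with $T(t,s)P(s)=P(t)T(t,s)$, $\|T(t,s)P(s)\|\le K(\mu(t)/\mu(s))^{-\alpha}$ ($t\ge s$), $\|T(t,s)Q(s)\|\le K(\mu(s)/\mu(t))^{-\alpha}$ ($t\le s$). $f:\mathbb{R}\times\mathbb{R}^n\to\mathbb{R}^n$ is continuous, $\|f(t,x)\|\le\beta\mu'(t)\mu^{-1}(t)$, $\|f(t,x_1)-f(t,x_2)\|\le\gamma\mu'(t)\mu^{-1}(t)\|x_1-x_2\|$ for constants $\beta,\gamma\ge0$, and $6K\gamma\alpha^{-1}<1$. $X(t,\tau,\xi)$ is the solution of $x'=A(t)x+f(t,x)$ with $X(\tau)=\xi$. For each $(\tau,\xi)$, $h(t,(\tau,\xi))$ denotes the unique solution bounded on $\mathbb{R}$ of $Z'=A(t)Z-f(t,X(t,\tau,\xi))$ (it exists and is unique under these hypotheses).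 Define $H(t,x)=x+h(t,(t,x))$. *)

(* Defs.v *)
From HB Require Import structures.
From mathcomp Require Import all_boot all_order all_algebra.
From mathcomp Require Import all_classical all_reals all_analysis.
Set Implicit Arguments. Unset Strict Implicit. Unset Printing Implicit Defensive.
Import Order.TTheory GRing.Theory Num.Theory.
Import numFieldNormedType.Exports.
Local Open Scope classical_set_scope.
Local Open Scope ring_scope.

(* Vectors of R^n are column vectors 'cV[R]_n, with MathComp's (sup) norm `|_|. *)

Definition evolution_operator (R : realType) (n : nat)
  (A : R -> 'M[R]_n) (T : R -> R -> 'M[R]_n) : Prop :=
  forall s, T s s = 1%:M /\
    forall t : R, is_derive t (1 : R) (fun u => T u s) (A t *m T t s).

Definition growth_rate (R : realType) (mu : R -> R) : Prop :=
  (forall t, 0 < mu t) /\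
  {homo mu : x y / x < y} /\
  (forall t : R, derivable mu t 1) /\
  mu 0 = 1 /\
  (mu x @[x --> -oo] --> (0 : R)) /\
  (mu x @[x --> +oo] --> +oo).

(* x' = A(t) x admits an algebraic (mu-)dichotomy with projections P,
   Q = I - P, and constants K, alpha > 0; the operator-norm bounds are
   written pointwise on vectors (i.e. w.r.t. the induced operator norm). *)
Definition algebraic_dichotomy (R : realType) (n : nat)
  (T : R -> R -> 'M[R]_n) (mu : R -> R) (P : R -> 'M[R]_n) (K alpha : R) : Prop :=
  0 < K /\ 0 < alpha /\
  (forall s, P s *m P s = P s) /\
  (forall t s, T t s *m P s = P t *m T t s) /\
  (forall t s (v : 'cV[R]_n), s <= t ->
      `|T t s *m P s *m v| <= K * powR (mu t / mu s) (- alpha) * `|v|) /\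
  (forall t s (v : 'cV[R]_n), t <= s ->
      `|T t s *m (1%:M - P s) *m v| <= K * powR (mu s / mu t) (- alpha) * `|v|).

Definition solves (R : realType) (n : nat) (A : R -> 'M[R]_n)
  (g : R -> 'cV[R]_n) (x : R -> 'cV[R]_n) : Prop :=
  forall t : R, is_derive t (1 : R) x (A t *m x t + g t).

(* H(t,x) = x + h(t,(t,x)), with h t tau xi standing for h(t,(tau,xi)). *)
Definition Hmap (R : realType) (n : nat)
  (h : R -> R -> 'cV[R]_n -> 'cV[R]_n) (t : R) (x : 'cV[R]_n) : 'cV[R]_n :=
  x + h t t x.

(* Main.v *)
Require Import Defs.
From HB Require Import structures.
From mathcomp Require Import all_boot all_order all_algebra.
From mathcomp Require Import all_classical all_reals all_analysis.
From mathcomp Require Import ring lra.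
Import Order.TTheory GRing.Theory Num.Theory.
Import numFieldNormedType.Exports.
Local Open Scope classical_set_scope.
Local Open Scope ring_scope.
Section Helpers.
Context {R : realType}.

Lemma is_derive_entry {m p} {F : R -> 'M[R]_(m,p)} {t : R} {dF : 'M[R]_(m,p)} i j :
  is_derive t 1 F dF -> is_derive t 1 (fun x => F x i j) (dF i j).
Proof.
case=> dv eq.
have dij := (derivable_mxP F t 1).1 dv i j.
apply: DeriveDef => //.
by rewrite -eq derive_mx // mxE.
Qed.

Lemma is_derive_entries m p (F : R -> 'M[R]_(m,p)) (t : R) (D : 'M[R]_(m,p)) :
  (forall i j, is_derive t 1 (fun x => F x i j) (D i j)) -> is_derive t 1 F D.
Proof.
move=> H.
have dv : derivable F t 1.
  by apply/derivable_mxP => i j; case: (H i j).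
apply: DeriveDef => //.
rewrite derive_mx //; apply/matrixP => i j; rewrite mxE.
by case: (H i j).
Qed.

Lemma is_derive_mulmx m p q (F : R -> 'M[R]_(m,p)) (t : R) (dF : 'M[R]_(m,p)) (v : 'M[R]_(p,q)) :
  is_derive t 1 F dF -> is_derive t 1 (fun x => F x *m v) (dF *m v).
Proof.
move=> HF; apply: is_derive_entries => i j.
have -> : (fun x => (F x *m v) i j) = \sum_(k < p) (fun x => F x i k * v k j).
  by apply/funext => x; rewrite fct_sumE mxE.
rewrite mxE.
apply: is_derive_sum => k.
have := is_deriveM (is_derive_entry i k HF) (is_derive_cst (v k j) t 1).
rewrite scaler0 add0r => H.
by apply: is_derive_eq H _; rewrite mulrC.
Qed.

Lemma mx_entry_le m p (M : 'M[R]_(m,p)) i j : `|M i j| <= `|M|.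
Proof.
rewrite [X in _ <= X]/Num.Def.normr /= mx_normrE.
exact: (le_bigmax _ (fun ij : 'I_m * 'I_p => `|M ij.1 ij.2|) (i, j)).
Qed.

Lemma mx_norm_le m p (M : 'M[R]_(m,p)) c : 0 <= c ->
  (forall i j, `|M i j| <= c) -> `|M| <= c.
Proof.
move=> c0 H.
rewrite [X in X <= _]/Num.Def.normr /= mx_normrE.
by apply: bigmax_le => // -[i j] _; apply: H.
Qed.

Lemma mulmx_norm_le m p q (M : 'M[R]_(m,p)) (v : 'M[R]_(p,q)) :
  `|M *m v| <= p%:R * `|M| * `|v|.
Proof.
apply: mx_norm_le; first by rewrite !mulr_ge0.
move=> i j; rewrite mxE.
apply: (le_trans (ler_norm_sum _ _ _)).
apply: (@le_trans _ _ (\sum_(k < p) (`|M| * `|v|))).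
  apply: ler_sum => k _; rewrite normrM.
  by apply: ler_pM => //; apply: mx_entry_le.
by rewrite sumr_const card_ord -mulrA mulr_natl.
Qed.

End Helpers.
Section Scal.
Context {R : realType}.

Lemma nincr_of_deriv (phi dphi : R -> R) :
  (forall x : R, is_derive x 1 phi (dphi x)) -> (forall x, dphi x <= 0) ->
  forall s t, s <= t -> phi t <= phi s.
Proof.
move=> D N s t st.
have dv : forall x, derivable phi x 1 by move=> x; case: (D x).
apply: (@ler0_derive1_le_cc R phi s t).
- by move=> x _; exact: dv.
- by move=> x _; rewrite derive1E derive_val.
- by apply: derivable_within_continuous => x _; exact: dv.
- by rewrite in_itv /= lexx st.
- by rewrite in_itv /= lexx st.
- exact: st.
Qed.

Lemma ndecr_of_deriv (phi dphi : R -> R) :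
  (forall x : R, is_derive x 1 phi (dphi x)) -> (forall x, 0 <= dphi x) ->
  forall s t, s <= t -> phi s <= phi t.
Proof.
move=> D N s t st.
have dv : forall x, derivable phi x 1 by move=> x; case: (D x).
apply: (@ger0_derive1_le_cc R phi s t).
- by move=> x _; exact: dv.
- by move=> x _; rewrite derive1E derive_val.
- by apply: derivable_within_continuous => x _; exact: dv.
- by rewrite in_itv /= lexx st.
- by rewrite in_itv /= lexx st.
- exact: st.
Qed.

Arguments nincr_of_deriv {phi dphi}.
Arguments ndecr_of_deriv {phi dphi}.

Lemma scalar_zero (V l dV dl : R -> R) s :
  (forall t : R, is_derive t 1 V (dV t)) -> (forall t : R, is_derive t 1 l (dl t)) ->
  (forall t, 0 <= V t) -> (forall t, `|dV t| <= dl t * V t) -> V s = 0 ->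
  forall t, V t = 0.
Proof.
move=> dVH dlH V0 HB Vs t.
case: (leP s t) => st.
- pose phi := fun x => V x * expR (- l x).
  have E (x : R) : is_derive x 1 (fun y => expR (- l y)) (expR (- l x) * - dl x).
    exact: (is_derive1_comp (is_derive_expR _) (is_deriveN (dlH x))).
  have D (x : R) : is_derive x 1 phi (expR (- l x) * (dV x - dl x * V x)).
    apply: (is_derive_eq (f := phi) (is_deriveM (dVH x) (E x))).
    rewrite /GRing.scale /=; ring.
  have : V t * expR (- l t) <= 0.
    rewrite -(mul0r (expR (- l s))) -Vs.
    apply: (nincr_of_deriv D) st => x.
    rewrite pmulr_rle0 ?expR_gt0 // subr_le0; apply: le_trans (ler_norm _) (HB x).
  rewrite pmulr_lle0 ?expR_gt0 // => Vt; apply/eqP; rewrite eq_le Vt V0 //.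
- pose phi := fun x => V x * expR (l x).
  have E (x : R) : is_derive x 1 (fun y => expR (l y)) (expR (l x) * dl x).
    exact: (is_derive1_comp (is_derive_expR _) (dlH x)).
  have D (x : R) : is_derive x 1 phi (expR (l x) * (dV x + dl x * V x)).
    apply: (is_derive_eq (f := phi) (is_deriveM (dVH x) (E x))).
    rewrite /GRing.scale /=; ring.
  have : V t * expR (l t) <= 0.
    rewrite -(mul0r (expR (l s))) -Vs.
    apply: (ndecr_of_deriv D) (ltW st) => x.
    rewrite pmulr_rge0 ?expR_gt0 //.
    have h1 := HB x; have h2 : - dV x <= `|dV x| by rewrite -normrN ler_norm.
    lra.
  rewrite pmulr_lle0 ?expR_gt0 // => Vt; apply/eqP; rewrite eq_le Vt V0 //.
Qed.
End Scal.
Section Vec.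
Context {R : realType}.

Lemma vec_zero n (w dw : R -> 'cV[R]_n) (k l dl : R -> R) s :
  (forall t : R, is_derive t 1 w (dw t)) -> (forall t : R, is_derive t 1 l (dl t)) ->
  (forall t, 0 <= k t) -> (forall t, `|dw t| <= k t * `|w t|) ->
  (forall t, 2 * n%:R * k t <= dl t) -> w s = 0 -> forall t, w t = 0.
Proof.
move=> dwH dlH k0 kB dlB ws.
pose V := fun t => \sum_(i < n) (w t i 0) ^+ 2.
pose dV := fun t => \sum_(i < n) ((2%:R * w t i 0 ^+ 1) *: dw t i 0).
have DV (t : R) : is_derive t 1 V (dV t).
  have -> : V = \sum_(i < n) (fun t => (w t i 0) ^+ 2).
    by apply/funext => x; rewrite fct_sumE.
  apply: is_derive_sum => i.
  exact: (is_deriveX 2 (is_derive_entry i 0 (dwH t))).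
have V0 t : 0 <= V t by apply: sumr_ge0 => i _; exact: sqr_ge0.
have wV t : `|w t| ^+ 2 <= V t.
  have [->|nz] := eqVneq `|w t| 0; first by rewrite expr0n /=.
  have [[i j] E] := mx_norm_neq0 nz.
  change (mx_norm (w t) ^+ 2 <= V t); rewrite E.
  rewrite /= (ord1 j) real_normK ?num_real //.
  rewrite /V (bigD1 i) //= lerDl; apply: sumr_ge0 => ? _; exact: sqr_ge0.
have went t i : `|w t i 0| <= `|w t|.
  exact: mx_entry_le.
have dwent t i : `|dw t i 0| <= `|dw t|.
  exact: mx_entry_le.
have HB t : `|dV t| <= dl t * V t.
  apply: (le_trans (ler_norm_sum _ _ _)).
  apply: (@le_trans _ _ (\sum_(i < n) (2 * (`|w t| * `|dw t|)))).
    apply: ler_sum => i _; rewrite /GRing.scale /= expr1 !normrM.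
    rewrite [`|2%:R|]ger0_norm // -mulrA ler_pM2l //.
    by apply: ler_pM; rewrite ?normr_ge0 ?went ?dwent.
  rewrite sumr_const card_ord -[X in X <= _]mulr_natl.
  apply: (@le_trans _ _ (2 * n%:R * k t * V t)); last first.
    by apply: ler_wpM2r => //.
  apply: (@le_trans _ _ (2 * n%:R * k t * `|w t| ^+ 2)); last first.
    by apply: ler_wpM2l => //; rewrite !mulr_ge0.
  have := kB t => h.
  have : `|w t| * `|dw t| <= `|w t| * (k t * `|w t|) by apply: ler_wpM2l.
  move=> h2.
  apply: (@le_trans _ _ (n%:R * (2 * (`|w t| * (k t * `|w t|))))).
    by apply: ler_wpM2l => //; apply: ler_wpM2l.
  by rewrite expr2 le_eqVlt; apply/orP; left; apply/eqP; ring.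
have Vs : V s = 0 by rewrite /V big1 // => i _; rewrite ws mxE expr0n.
have VZ := @scalar_zero _ V l dV dl s DV dlH V0 HB Vs.
move=> t; apply/eqP; rewrite -normr_eq0.
have := wV t; rewrite VZ => h.
by rewrite -sqrf_eq0 eq_le h sqr_ge0.
Qed.
End Vec.
Section Dich.
Context {R : realType}.

Lemma le0_of_eps (x : R) : (forall e, 0 < e -> x <= e) -> x <= 0.
Proof.
move=> H; case: (leP x 0) => // x0.
have := H (x / 2); rewrite divr_gt0 // => /(_ isT) h; lra.
Qed.

Lemma powR_small (a : R) : 0 < a -> forall e, 0 < e ->
  exists2 d, 0 < d & forall x, 0 <= x -> x <= d -> powR x a <= e.
Proof.
move=> a0 e e0; exists (powR e a^-1); first by rewrite powR_gt0.
move=> x x0 xd.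
have := @ge0_ler_powR R a (ltW a0) x (powR e a^-1).
rewrite !nnegrE powR_ge0 x0 => /(_ isT isT xd) /= h.
by apply: (le_trans h); rewrite -powRrM mulVf ?gt_eqF // powRr1 // ltW.
Qed.

Lemma powR_inv (x a : R) : 0 < x -> powR (x^-1) a = (powR x a)^-1.
Proof.
move=> x0.
have h : powR x a * powR (x^-1) a = 1.
  by rewrite -powRM ?invr_ge0 ?ltW // mulfV ?gt_eqF // powR1.
have nz : powR x a != 0 by rewrite gt_eqF // powR_gt0.
by rewrite -[LHS]mul1r -(mulVf nz) -mulrA h mulr1.
Qed.

Lemma powR_divN (x y a : R) : 0 < x -> 0 < y ->
  powR (x / y) (- a) = powR (y / x) a.
Proof.
by move=> x0 y0; rewrite powRN -powR_inv ?divr_gt0 // invf_div.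
Qed.

Lemma dich_zero n (T : R -> R -> 'M[R]_n) mu P K alpha
  (Z : R -> 'cV[R]_n) B :
  growth_rate mu -> algebraic_dichotomy T mu P K alpha -> 0 < B ->
  (forall s, `|Z s| <= B) -> (forall t s, Z t = T t s *m Z s) ->
  forall t, Z t = 0.
Proof.
move=> [mu0 [muinc [_ [_ [muNy muy]]]]] [K0 [a0 [_ [TP [dP dQ]]]]] B0 ZB ZT t.
have key : forall e, 0 < e -> exists2 d, 0 < d &
    forall x, 0 <= x -> x <= d -> K * powR x alpha * B <= e.
  move=> e e0.
  have [d d0 Hd] := powR_small alpha a0 _ (divr_gt0 e0 (mulr_gt0 K0 B0)).
  exists d => // x x0 xd.
  have := Hd x x0 xd => h.
  rewrite [K * _]mulrC -mulrA.
  have -> : e = e / (K * B) * (K * B) by rewrite mulfVK // gt_eqF // mulr_gt0.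
  by apply: ler_wpM2r => //; rewrite mulr_ge0 // ltW.
have HP : P t *m Z t = 0.
  apply/eqP; rewrite -normr_eq0 eq_le normr_ge0 andbT.
  apply: le0_of_eps => e e0.
  have [d d0 Hd] := key e e0.
  have dm : 0 < d * mu t by rewrite mulr_gt0.
  have H1 := cvgr_dist_lt _ _ muNy _ dm.
  have H2 : \forall x \near -oo, x <= t /\ `|0 - mu x| < d * mu t.
    near=> x; split; near: x; last exact: H1.
    by apply: nbhs_ninfty_le; rewrite num_real.
  have [s [st ms]] := filter_ex H2.
  rewrite (ZT t s) mulmxA -TP.
  apply: (le_trans (dP t s (Z s) st)).
  rewrite powR_divN //.
  apply: (le_trans _ (Hd (mu s / mu t) _ _)).
  - by apply: ler_wpM2l; [rewrite mulr_ge0 // ?powR_ge0 // ltW | exact: ZB].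
  - by rewrite divr_ge0 // ltW.
  - rewrite ler_pdivrMr //; rewrite sub0r normrN gtr0_norm // in ms; exact: ltW.
have HQ : (1%:M - P t) *m Z t = 0.
  apply/eqP; rewrite -normr_eq0 eq_le normr_ge0 andbT.
  apply: le0_of_eps => e e0.
  have [d d0 Hd] := key e e0.
  have H1 := (cvgryPge _).1 muy (mu t / d).
  have H2 : \forall x \near +oo, t <= x /\ mu t / d <= mu x.
    near=> x; split; near: x; last exact: H1.
    by apply: nbhs_pinfty_ge; rewrite num_real.
  have [s [st ms]] := filter_ex H2.
  have TQ : (1%:M - P t) *m T t s = T t s *m (1%:M - P s).
    by rewrite mulmxBl mulmxBr mul1mx mulmx1 TP.
  rewrite (ZT t s) mulmxA TQ.
  apply: (le_trans (dQ t s (Z s) st)).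
  rewrite powR_divN //.
  apply: (le_trans _ (Hd (mu t / mu s) _ _)).
  - by apply: ler_wpM2l; [rewrite mulr_ge0 // ?powR_ge0 // ltW | exact: ZB].
  - by rewrite divr_ge0 // ltW.
  - by rewrite ler_pdivrMr // mulrC -ler_pdivrMr.
have -> : Z t = P t *m Z t + (1%:M - P t) *m Z t.
  by rewrite mulmxBl mul1mx addrC subrK.
by rewrite HP HQ addr0.
Unshelve. all: by end_near.
Qed.
End Dich.

Lemma eq_le' {R : realType} (x y : R) : x = y -> x <= y.
Proof. by move=> ->. Qed.

Theorem lemma3p5 (R : realType) (n : nat)
  (A : R -> 'M[R]_n) (T : R -> R -> 'M[R]_n) (mu : R -> R)
  (P : R -> 'M[R]_n) (K alpha beta gamma : R)
  (f : R -> 'cV[R]_n -> 'cV[R]_n)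
  (X : R -> R -> 'cV[R]_n -> 'cV[R]_n)
  (h : R -> R -> 'cV[R]_n -> 'cV[R]_n) :
  continuous A ->
  (exists M : R, forall t, `|A t| <= M) ->
  evolution_operator A T ->
  growth_rate mu ->
  algebraic_dichotomy T mu P K alpha ->
  continuous (fun p : R * 'cV[R]_n => f p.1 p.2) ->
  0 <= beta -> 0 <= gamma ->
  (forall t x, `|f t x| <= beta * (derive1 mu t / mu t)) ->
  (forall t x1 x2, `|f t x1 - f t x2| <= gamma * (derive1 mu t / mu t) * `|x1 - x2|) ->
  6 * K * gamma / alpha < 1 ->
  (* X(t,tau,xi) is the solution of x' = A(t)x + f(t,x) with X(tau) = xi *)
  (forall tau xi, X tau tau xi = xi /\
     solves A (fun t => f t (X t tau xi)) (fun t => X t tau xi)) ->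
  (* h(t,(tau,xi)) is the (unique) solution bounded on R of
     Z' = A(t) Z - f(t, X(t,tau,xi)) *)
  (forall tau xi, (exists M : R, forall t, `|h t tau xi| <= M) /\
     solves A (fun t => - f t (X t tau xi)) (fun t => h t tau xi)) ->
  forall (t0 : R) (x0 : 'cV[R]_n),
    solves A (fun _ => 0) (fun t => Hmap h t (X t t0 x0)).
Proof.
move=> _ [M AM] evT gr dich _ b0 g0 fb fL _ Xsol hsol t0 x0.
have M0 : 0 <= M := le_trans (normr_ge0 _) (AM 0).
have [mu0 [muinc [mud _]]] := gr.
have dmu (t : R) : is_derive t 1 mu (derive1 mu t).
  by rewrite derive1E; exact: derivableP (mud t).
have dmu0 (t : R) : 0 <= derive1 mu t.
  apply: (@incr_derive1_ge0 _ mu setT t).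
  - by move=> x _; exact: mud.
  - by move=> x y _ _; exact: muinc.
  - by rewrite interiorT.
pose k := fun t => n%:R * M + gamma * (derive1 mu t / mu t).
pose l := fun t => 2 * n%:R * (n%:R * M * t + gamma * ln (mu t)).
pose dl := fun t => 2 * n%:R * (n%:R * M * 1 + gamma * ((mu t)^-1 * derive1 mu t)).
have k0 t : 0 <= k t.
  by rewrite /k addr_ge0 ?mulr_ge0 ?divr_ge0 // invr_ge0 (ltW (mu0 t)).
have Dl (t : R) : is_derive t 1 l (dl t).
  have h1 := is_derive1_comp (is_derive1_ln (mu0 t)) (dmu t).
  have h2 := is_deriveD (is_deriveZ (n%:R * M) (is_derive_id t 1)) (is_deriveZ gamma h1).
  exact: (is_deriveZ (2 * n%:R) h2).
have dlk t : 2 * n%:R * k t <= dl t.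
  by apply: eq_le'; rewrite /k /dl mulr1 [_^-1 * _]mulrC.
pose Y := fun s => X s t0 x0.
have AB (s : R) (v : 'cV[R]_n) : `|A s *m v| <= n%:R * M * `|v|.
  apply: le_trans; first exact: mulmx_norm_le.
  by apply: ler_wpM2r => //; apply: ler_wpM2l => //.
have flow t s : X s t (Y t) = Y s.
  pose w := fun s => X s t (Y t) - Y s.
  pose dw := fun s => (A s *m X s t (Y t) + f s (X s t (Y t))) - (A s *m Y s + f s (Y s)).
  have Dw (r : R) : is_derive r 1 w (dw r).
    exact: (is_deriveB ((Xsol t (Y t)).2 r) ((Xsol t0 x0).2 r)).
  have Bw r : `|dw r| <= k r * `|w r|.
    have -> : dw r = A r *m w r + (f r (X r t (Y t)) - f r (Y r)).
      by rewrite /dw /w mulmxBr opprD addrACA.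
    apply: (le_trans (ler_normD _ _)).
    rewrite /k mulrDl.
    by apply: lerD; [exact: AB | exact: fL].
  have w0 : w t = 0 by rewrite /w (Xsol t (Y t)).1 subrr.
  have := @vec_zero _ n w dw k l dl t Dw Dl k0 Bw dlk w0 s.
  by move/eqP; rewrite subr_eq0 => /eqP.
have hconst t s : h s t (Y t) = h s t0 x0.
  pose Z := fun s => h s t (Y t) - h s t0 x0.
  have [[M1 HM1] Dh1] := hsol t (Y t).
  have [[M2 HM2] Dh2] := hsol t0 x0.
  have DZ (r : R) : is_derive r 1 Z (A r *m Z r).
    apply: is_derive_eq; first exact: (is_deriveB (Dh1 r) (Dh2 r)).
    by rewrite /Z flow mulmxBr opprD addrACA subrr addr0.
  have M10 : 0 <= M1 := le_trans (normr_ge0 _) (HM1 0).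
  have M20 : 0 <= M2 := le_trans (normr_ge0 _) (HM2 0).
  have ZB r : `|Z r| <= M1 + M2 + 1.
    apply: (le_trans (ler_normB _ _)).
    by apply: ler_wpDr; [exact: ler01 | exact: lerD].
  have ZT r q : Z r = T r q *m Z q.
    pose u := fun r => Z r - T r q *m Z q.
    have Du (x : R) : is_derive x 1 u (A x *m u x).
      apply: (is_derive_eq (f := u) (is_deriveB (DZ x)
        (@is_derive_mulmx _ _ _ _ (fun u => T u q) x (A x *m T x q) (Z q) ((evT q).2 x)))).
      by rewrite /u /Z !mulmxBr !mulmxA.
    have Bu x : `|A x *m u x| <= k x * `|u x|.
      apply: (le_trans (AB _ _)); apply: ler_wpM2r => //.
      by rewrite /k lerDl mulr_ge0 ?divr_ge0 // ?invr_ge0 (ltW (mu0 x)).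
    have u0 : u q = 0 by rewrite /u (evT q).1 mul1mx subrr.
    have := @vec_zero _ n u (fun x => A x *m u x) k l dl q Du Dl k0 Bu dlk u0 r.
    by move/eqP; rewrite subr_eq0 => /eqP.
  have := @dich_zero _ n T mu P K alpha Z (M1 + M2 + 1) gr dich (ltr_pwDr ltr01 (addr_ge0 M10 M20)) ZB ZT s.
  by move/eqP; rewrite subr_eq0 => /eqP.
move=> t.
have -> : (fun t => Hmap h t (X t t0 x0)) = fun t => Y t + h t t0 x0.
  by apply/funext => r; rewrite /Hmap -/(Y r) hconst.
apply: is_derive_eq; first exact: (is_deriveD ((Xsol t0 x0).2 t) ((hsol t0 x0).2 t)).
by rewrite addr0 mulmxDr addrACA subrr addr0 /Y hconst.
Qed.
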